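(* Let $r\ge2$, $k\ge3$ and let $\widehat{F}_k$ be an $r$-coloring of $K_k$. If $G$ is an $(r,\widehat{F}_k)$-extremal graph, $S\subseteq V(G)$ is an independent set and $H=G-S$, then for every $u,v\in S$ we have $\vec{u}_H=\vec{v}_H$.
   Context: An $r$-coloring of a graph assigns colors from $\{1,\dots,r\}$ to edges (not necessarily properly). A copy of $\widehat{F}_k$ in a colored graph is a set of $k$ pairwise adjacent vertices admitting a bijection to $V(K_k)$ under which two edges have equal colors iff their images have equal colors in $\widehat{F}_k$; a coloring is $\widehat{F}_k$-free if it has no copy. $c_{r,\widehat{F}_k}(G)$ is the number of $\widehat{F}_k$-free $r$-colorings of $E(G)$, $c_{r,\widehat{F}_k}(n)$ its maximum over $n$-vertex graphs, and an $n$-vertex graph $G$ is $(r,\widehat{F}_k)$-extremal if $c_{r,\widehat{F}_k}(G)=c_{r,\widehat{F}_k}(n)$. For a subgraph $H$ of $G$, a vertex $v\in V(G)\setminus V(H)$ and an $\widehat{F}_k$-free coloring $\widehat{H}$ of $H$, $c(v,\widehat{H})$ denotes the number of ways to $r$-color the edges of $G$ from $v$ to $V(H)$ so that the resulting coloring of $G[V(H)\cup\{v\}]$ is $\widehat{F}_k$-free. $\vec{v}_H$ is the vector indexed by the $\widehat{F}_k$-free $r$-colorings $\widehat{H}$ of $H$ with $\vec{v}_H(\widehat{H})=c(v,\widehat{H})$. *)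

(* Defs.v *)
From mathcomp Require Import all_boot.
Set Implicit Arguments. Unset Strict Implicit. Unset Printing Implicit Defensive.

Section ColoredGraphs.
Variable V : finType.

Definition simple_graph (g : rel V) : Prop := symmetric g /\ irreflexive g.

Definition is_edge (g : rel V) (A : {set V}) : bool :=
  [exists x, exists y, [&& x != y, g x y & A == [set x; y]]].

Definition edge (g : rel V) := {A : {set V} | is_edge g A}.

Definition coloring (r : nat) (g : rel V) := {ffun edge g -> 'I_r}.

Definition ecol r (g : rel V) (c : coloring r g) (x y : V) : option 'I_r :=
  omap c (insub [set x; y] : option (edge g)).

(* Induced subgraph G[W], kept on the vertex type V (vertices outside W
   become isolated; its edge set is exactly E(G[W])). *)
Definition induced (g : rel V) (W : {set V}) : rel V :=
  fun x y => [&& x \in W, y \in W & g x y].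

End ColoredGraphs.

Definition Kgraph (k : nat) : rel 'I_k := fun i j => i != j.
Arguments Kgraph k : clear implicits.

Definition has_copy (V : finType) r k (phi : coloring r (Kgraph k))
  (g : rel V) (c : coloring r g) : bool :=
  [exists s : {ffun 'I_k -> V},
     [&& injectiveb s,
         [forall i, forall j, (i != j) ==> g (s i) (s j)] &
         [forall i, forall j, forall i', forall j',
            ((i != j) && (i' != j')) ==>
            ((ecol c (s i) (s j) == ecol c (s i') (s j'))
             == (ecol phi i j == ecol phi i' j'))]]].

Definition Ffree (V : finType) r k (phi : coloring r (Kgraph k))
  (g : rel V) (c : coloring r g) : bool := ~~ has_copy phi c.

Definition cnt (V : finType) r k (phi : coloring r (Kgraph k)) (g : rel V) : nat :=
  #|[set c : coloring r g | Ffree phi c]|.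

Definition extremal (V : finType) r k (phi : coloring r (Kgraph k)) (g : rel V) : Prop :=
  simple_graph g /\
  forall g' : rel V, simple_graph g' -> cnt phi g' <= cnt phi g.

(* c(v, Hhat): H = G[W], v \notin W, Hhat a coloring of H; number of
   F-free colorings of G[W ∪ {v}] extending Hhat (i.e. the colorings of
   the edges from v to W making the whole F-free). *)
Definition cext (V : finType) r k (phi : coloring r (Kgraph k)) (g : rel V)
  (W : {set V}) (v : V) (Hh : coloring r (induced g W)) : nat :=
  #|[set c : coloring r (induced g (v |: W)) |
      Ffree phi c &&
      [forall x, forall y,
         ((x \in W) && (y \in W)) ==> (ecol c x y == ecol Hh x y)]]|.

Arguments cext V r k phi g W v Hh : clear implicits.
Arguments cext {V r k} phi g W v Hh.

(* The vector \vec v_H, indexed by the F-free colorings of H = G[W]. *)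
Definition cvec (V : finType) r k (phi : coloring r (Kgraph k)) (g : rel V)
  (W : {set V}) (v : V) : coloring r (induced g W) -> option nat :=
  fun Hh => if Ffree phi Hh then Some (cext phi g W v Hh) else None.
Arguments cvec {V r k} phi g W v Hh.

(* Main.v *)
Require Import Defs.
From mathcomp Require Import all_boot fingroup perm zify.
From Stdlib Require Import FunctionalExtensionality.

Set Implicit Arguments. Unset Strict Implicit. Unset Printing Implicit Defensive.

Section Basics.
Variables (V : finType) (r : nat).

Lemma set2_eq (x y a b : V) : x != y -> [set x; y] = [set a; b] ->
  (a = x /\ b = y) \/ (a = y /\ b = x).
Proof.
move=> xy E.
have ha : a \in [set x; y] by rewrite E set21.
have hb : b \in [set x; y] by rewrite E set22.
have hx : x \in [set a; b] by rewrite -E set21.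
have hy : y \in [set a; b] by rewrite -E set22.
move: ha hb hx hy; rewrite !in_set2.
case/orP=> /eqP ->; case/orP=> /eqP ->; rewrite ?eqxx ?orbF ?orbb //=;
  try by [left|right].
- by move=> _ /eqP yx; rewrite yx eqxx in xy.
- by move=> /eqP xy'; rewrite xy' eqxx in xy.
Qed.

Lemma is_edge2 (g : rel V) x y : is_edge g [set x; y] = (x != y) && (g x y || g y x).
Proof.
apply/existsP/andP.
- case=> a /existsP [b /and3P [ab gab /eqP E]].
  have [[-> ->]|[-> ->]] := set2_eq ab (esym E).
    by rewrite gab.
  by rewrite eq_sym ab gab orbT.
- case=> xy /orP [gxy|gyx].
    by exists x; apply/existsP; exists y; rewrite xy gxy eqxx.
  exists y; apply/existsP; exists x; rewrite eq_sym xy gyx /=.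
  by rewrite setUC.
Qed.

Lemma ecolC (g : rel V) (c : coloring r g) x y : ecol c x y = ecol c y x.
Proof. by rewrite /ecol setUC. Qed.

Lemma ecol_None (g : rel V) (c : coloring r g) x y :
  (ecol c x y != None) = (x != y) && (g x y || g y x).
Proof.
rewrite /ecol -is_edge2; case: insubP => [e He Ve|He] /=; first by rewrite He.
by rewrite (negbTE He).
Qed.

Definition pat := {ffun V -> {ffun V -> option 'I_r}}.
Definition ecolF (g : rel V) (c : coloring r g) : pat :=
  [ffun x => [ffun y => ecol c x y]].

Definition inPat (G : rel V) (f : pat) : bool :=
  [forall x, forall y, (f x y == f y x) &&
     ((f x y != None) == ((x != y) && (G x y || G y x)))].

Lemma inPatP (G : rel V) (f : pat) :
  reflect (forall x y, f x y = f y x /\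
     ((f x y != None) = ((x != y) && (G x y || G y x)))) (inPat G f).
Proof.
apply: (iffP forallP) => [H x y|H x]; last first.
  by apply/forallP=> y; have [-> ->] := H x y; rewrite !eqxx.
by have /forallP/(_ y)/andP[/eqP -> /eqP ->] := H x.
Qed.

Lemma ecolF_Pat (g : rel V) (c : coloring r g) : inPat g (ecolF c).
Proof. by apply/inPatP=> x y; rewrite !ffunE ecol_None ecolC. Qed.

Lemma ecolF_inj (g : rel V) : injective (@ecolF g).
Proof.
move=> c1 c2 E; apply/ffunP => -[A HA].
have := HA; case/existsP => x /existsP [y /and3P [_ _ /eqP EA]].
subst A.
have := congr1 (fun f : pat => f x y) E; rewrite !ffunE /ecol.
by rewrite (insubT (is_edge g) HA) /= => -[].
Qed.

Lemma Pat_ecolF (d : 'I_r) (g : rel V) (f : pat) : inPat g f ->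
  exists c : coloring r g, ecolF c = f.
Proof.
move/inPatP=> Hf.
pose c : coloring r g := [ffun e : edge g => odflt d
   [pick o | [exists x, exists y, (val e == [set x; y]) && (f x y == Some o)]]].
exists c; apply/ffunP=> x; apply/ffunP=> y; rewrite !ffunE /ecol.
case: insubP => [e He Ve|He] /=.
- have := He; rewrite is_edge2 => /andP [xy _].
  rewrite ffunE; case: pickP => [o|none].
    move=> /existsP [x' /existsP [y' /andP [/eqP E /eqP Fo]]].
    rewrite Ve in E.
    by have [[? ?]|[? ?]] := set2_eq xy E; subst; rewrite ?Fo // (Hf x y).1 Fo.
  have := (Hf x y).2; rewrite -is_edge2 He.
  case Efxy: (f x y) => [o|] // _.
  have := none o; move/negbT/negP; case.
  by apply/existsP; exists x; apply/existsP; exists y; rewrite Ve Efxy !eqxx.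
- have := (Hf x y).2; rewrite -is_edge2 (negbTE He).
  by case: (f x y).
Qed.

End Basics.

Set Implicit Arguments. Unset Strict Implicit. Unset Printing Implicit Defensive.

Section Free.
Variables (V : finType) (r k : nat) (phi : coloring r (Kgraph k)).

Definition pcopyS (F : V -> V -> option 'I_r) (s : {ffun 'I_k -> V}) : bool :=
  [&& injectiveb s, [forall i, forall j, (i != j) ==> (F (s i) (s j) != None)] &
   [forall i, forall j, forall i', forall j', ((i != j) && (i' != j')) ==>
      ((F (s i) (s j) == F (s i') (s j')) == (ecol phi i j == ecol phi i' j'))]].
Definition pfree F := ~~ [exists s, pcopyS F s].

Lemma pcopyS_ext F1 F2 (s : {ffun 'I_k -> V}) : (forall i j, F1 (s i) (s j) = F2 (s i) (s j)) ->
  pcopyS F1 s = pcopyS F2 s.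
Proof.
move=> E; rewrite /pcopyS; congr (_ && (_ && _)).
  by apply: eq_forallb => i; apply: eq_forallb => j; rewrite E.
apply: eq_forallb => i; apply: eq_forallb => j.
apply: eq_forallb => i'; apply: eq_forallb => j'; by rewrite !E.
Qed.

Lemma Ffree_pfree (g : rel V) (gs : symmetric g) (c : coloring r g) :
  Ffree phi c = pfree (ecol c).
Proof.
rewrite /Ffree /pfree /has_copy; congr (~~ _); apply: eq_existsb => s.
rewrite /pcopyS; case Hi: (injectiveb s) => //=; congr (_ && _).
apply: eq_forallb => i; apply: eq_forallb => j; case: eqVneq => //= ij.
have sij : s i != s j by apply: contra ij => /eqP/(injectiveP _ Hi) ->.
by rewrite ecol_None sij gs orbb.
Qed.

Definition restrF (A : {set V}) (F : V -> V -> option 'I_r) :=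
  fun x y => if (x \in A) && (y \in A) then F x y else None.

Lemma pcopy_restr (A : {set V}) F (s : {ffun 'I_k -> V}) : (forall i, s i \in A) ->
  pcopyS (restrF A F) s = pcopyS F s.
Proof. by move=> H; apply: pcopyS_ext => i j; rewrite /restrF !H. Qed.

Lemma pcopy_in (A : {set V}) F (s : {ffun 'I_k -> V}) : 1 < k -> pcopyS (restrF A F) s -> forall i, s i \in A.
Proof.
move=> k1 /and3P [_ /forallP H _] i.
have [j ij] : exists j : 'I_k, i != j.
  have k0 : 0 < k := ltnW k1.
  case: (eqVneq (val i) 0) => [i0|i0].
    by exists (Ordinal k1); apply/eqP => E; rewrite E in i0.
  by exists (Ordinal k0); apply/eqP => E; rewrite E in i0.
have /forallP/(_ j) := H i; rewrite ij /= /restrF.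
by case: (s i \in A).
Qed.

Lemma pfree_restr (A : {set V}) F : 1 < k -> pfree F -> pfree (restrF A F).
Proof.
move=> k1; apply: contra => /existsP [s Hs]; apply/existsP; exists s.
by rewrite -(pcopy_restr _ (pcopy_in k1 Hs)).
Qed.

Lemma pcopy_perm1 (p : {perm V}) F :
  [exists s, pcopyS (fun x y => F (p x) (p y)) s] -> [exists s, pcopyS F s].
Proof.
case/existsP => s /and3P [Hi H1 H2]; apply/existsP; exists [ffun i => p (s i)].
apply/and3P; split.
- apply/injectiveP => i j; rewrite !ffunE => /perm_inj.
  by move/injectiveP: Hi; apply.
- by apply/forallP => i; apply/forallP => j; rewrite !ffunE; move/forallP: H1 => /(_ i)/forallP/(_ j).
- apply/forallP => i; apply/forallP => j; apply/forallP => i'; apply/forallP => j'.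
  rewrite !ffunE.
  by move/forallP: H2 => /(_ i)/forallP/(_ j)/forallP/(_ i')/forallP/(_ j').
Qed.

Lemma pfree_perm (p : {perm V}) F :
  pfree (fun x y => F (p x) (p y)) = pfree F.
Proof.
rewrite /pfree; congr (~~ _); apply/idP/idP; first exact: pcopy_perm1.
move=> H; apply: (@pcopy_perm1 (p^-1)%g).
have -> : (fun x y => F (p ((p^-1)%g x)) (p ((p^-1)%g y))) = F.
  by apply: functional_extensionality => x; apply: functional_extensionality => y; rewrite !permKV.
by [].
Qed.

End Free.

Set Implicit Arguments. Unset Strict Implicit. Unset Printing Implicit Defensive.

Section Sets.
Variables (V : finType) (r k : nat) (phi : coloring r (Kgraph k)) (d : 'I_r).

Definition pf (f : pat V r) : V -> V -> option 'I_r := fun x y => f x y.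

Lemma pf_ecolF (g : rel V) (c : coloring r g) : pf (ecolF c) = ecol c.
Proof.
by apply: functional_extensionality => x; apply: functional_extensionality => y; rewrite /pf !ffunE.
Qed.

Lemma card_col (G : rel V) (P : pat V r -> bool) :
  #|[set c : coloring r G | P (ecolF c)]| = #|[set f | inPat G f && P f]|.
Proof.
rewrite -(card_imset _ (@ecolF_inj V r G)); apply: eq_card => f.
rewrite inE; apply/imsetP/andP.
- by case=> c; rewrite inE => Pc ->; split=> //; apply: ecolF_Pat.
- case=> fP Pf; have [c Ec] := Pat_ecolF d fP.
  by exists c; rewrite // inE Ec.
Qed.

Definition Pset (G : rel V) := [set f : pat V r | inPat G f && pfree phi (pf f)].

Definition Bset (G : rel V) (W A : {set V}) (h : pat V r) :=
  [set f : pat V r | [&& inPat (induced G A) f, pfree phi (pf f) &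
     [forall x, forall y, ((x \in W) && (y \in W)) ==> (f x y == h x y)]]].

Lemma induced_sym (G : rel V) A : symmetric G -> symmetric (induced G A).
Proof. by move=> Gs x y; rewrite /induced Gs; case: (x \in A); case: (y \in A). Qed.

Lemma cnt_P (G : rel V) : symmetric G -> cnt phi G = #|Pset G|.
Proof.
move=> Gs; rewrite /cnt -card_col /Pset.
by apply: eq_card => c; rewrite !inE pf_ecolF Ffree_pfree.
Qed.

Lemma cext_B (g : rel V) W v (Hh : coloring r (induced g W)) : symmetric g ->
  cext phi g W v Hh = #|Bset g W (v |: W) (ecolF Hh)|.
Proof.
move=> gs; rewrite /cext.
pose P := fun f : pat V r => pfree phi (pf f) &&
     [forall x, forall y, ((x \in W) && (y \in W)) ==> (f x y == ecolF Hh x y)].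
transitivity #|[set c : coloring r (induced g (v |: W)) | P (ecolF c)]|.
  apply: eq_card => c; rewrite !inE /P pf_ecolF Ffree_pfree; last exact: induced_sym.
  congr (_ && _); apply: eq_forallb => x; apply: eq_forallb => y.
  by rewrite !ffunE.
by rewrite card_col; apply: eq_card => f; rewrite !inE.
Qed.

End Sets.

Set Implicit Arguments. Unset Strict Implicit. Unset Printing Implicit Defensive.

Section Decomp.
Variables (V : finType) (r k : nat) (phi : coloring r (Kgraph k)).
Hypothesis k1 : 1 < k.

Definition restr (A : {set V}) (f : pat V r) : pat V r :=
  [ffun x => [ffun y => if (x \in A) && (y \in A) then f x y else None]].

Lemma pf_restr A f : pf (restr A f) = restrF A (pf f).
Proof.
by apply: functional_extensionality => x; apply: functional_extensionality => y; rewrite /pf !ffunE.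
Qed.

Lemma Pat_None (G : rel V) (f : pat V r) x y : inPat G f -> ~~ ((x != y) && (G x y || G y x)) ->
  f x y = None.
Proof. move=> /inPatP /(_ x y) [_ E] H; apply/eqP; apply: contraNT H => H; by rewrite -E. Qed.

Lemma restr_Pat (G : rel V) A (f : pat V r) : inPat G f -> inPat (induced G A) (restr A f).
Proof.
move=> /inPatP H; apply/inPatP => x y; rewrite !ffunE.
have [E1 E2] := H x y; rewrite /induced.
case xA: (x \in A); case yA: (y \in A) => //=; rewrite ?E1 ?E2 // ?andbF //.
Qed.

Lemma restr_P (G : rel V) A (f : pat V r) : f \in Pset phi G -> restr A f \in Pset phi (induced G A).
Proof.
rewrite !inE => /andP [P1 P2]; rewrite restr_Pat //= pf_restr.
exact: pfree_restr.
Qed.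

Lemma copy_edge F (s : {ffun 'I_k -> V}) i j : pcopyS phi F s -> i != j ->
  F (s i) (s j) != None.
Proof. by case/and3P => _ /forallP /(_ i) /forallP /(_ j) /implyP H _; apply: H. Qed.

Variables (G : rel V) (S : {set V}).
Hypothesis Gind : forall x y, x \in S -> y \in S -> ~~ G x y.
Let W := ~: S.

Section Fiber.
Variable h : pat V r.
Hypothesis hP : h \in Pset phi (induced G W).

Definition Fm (w : V) : {pred pat V r} :=
  if w \in S then mem (Bset phi G W (w |: W) h) else mem (pred1 h).

Definition phiF (f : pat V r) : {ffun V -> pat V r} :=
  [ffun w => if w \in S then restr (w |: W) f else h].

Definition psiF (t : {ffun V -> pat V r}) : pat V r :=
  [ffun x => [ffun y => if x \in S then (if y \in S then None else t x x y)
                        else if y \in S then t y x y else h x y]].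

Definition Fib := [set f in Pset phi G | restr W f == h].

Lemma psi_phi (f : pat V r) : f \in Fib -> psiF (phiF f) = f.
Proof.
rewrite !inE => /andP [/andP [fP _] /eqP Eh].
apply/ffunP => x; apply/ffunP => y; rewrite !ffunE.
case xS: (x \in S); case yS: (y \in S); rewrite /= ?ffunE ?xS ?yS.
- by rewrite (Pat_None fP) // (negbTE (Gind xS yS)) (negbTE (Gind yS xS)) andbF.
- by rewrite /W !in_setU1 !in_setC eqxx yS orbT.
- by rewrite /W !in_setU1 !in_setC eqxx xS orbT.
- by rewrite -Eh !ffunE /W !in_setC xS yS.
Qed.

Lemma phi_psi t : t \in family Fm -> phiF (psiF t) = t.
Proof.
move/familyP => Ht; apply/ffunP => w; rewrite ffunE.
have := Ht w; rewrite /Fm; case wS: (w \in S); last by move/eqP ->.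
rewrite inE => /and3P [tP _ /forallP tA].
apply/ffunP => x; apply/ffunP => y; rewrite !ffunE.
case xA: (x \in w |: W); last first.
  by rewrite /=; symmetry; apply: (Pat_None tP); rewrite /induced xA /= ?andbF ?orbF.
case yA: (y \in w |: W); last first.
  by rewrite /= ?andbF; symmetry; apply: (Pat_None tP); rewrite /induced yA /= ?andbF ?orbF.
rewrite /=; move: xA yA; rewrite !in_setU1 !in_setC.
case/orP => [/eqP -> | xS]; case/orP => [/eqP -> | yS].
- by rewrite wS (Pat_None tP) // eqxx.
- by rewrite wS (negbTE yS).
- by rewrite wS (negbTE xS).
- rewrite (negbTE xS) (negbTE yS).
  by have /forallP /(_ y) /implyP := tA x; rewrite !in_setC xS yS => /(_ isT) /eqP ->.
Qed.

Lemma phiF_fam (f : pat V r) : f \in Fib -> phiF f \in family Fm.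
Proof.
move=> fF; have := fF; rewrite !inE => /andP [fP /eqP Eh].
apply/familyP => w; rewrite /Fm ffunE; case wS: (w \in S); last by rewrite inE.
have fP' : f \in Pset phi G by rewrite inE.
have := restr_P (w |: W) fP'; rewrite !inE => /andP [-> ->] /=.
apply/forallP => x; apply/forallP => y; apply/implyP => /andP [xW yW].
by rewrite -Eh !ffunE !in_setU1 xW yW !orbT.
Qed.

Lemma psiF_Fib t : t \in family Fm -> psiF t \in Fib.
Proof.
move=> tF; have Ht := familyP tF.
have hP' := hP; rewrite inE in hP'; case/andP: hP' => hPat hfree.
have tw w : w \in S -> t w \in Bset phi G W (w |: W) h.
  by move=> wS; have := Ht w; rewrite /Fm wS.
have Hrh : restr W (psiF t) = h.
  apply/ffunP => x; apply/ffunP => y; rewrite !ffunE /W !in_setC.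
  case xS: (x \in S); case yS: (y \in S) => //=;
   symmetry; apply: (Pat_None hPat); rewrite /induced /W !in_setC xS yS /= ?andbF //.
have PatG : inPat G (psiF t).
  apply/inPatP => x y; rewrite !ffunE.
  case xS: (x \in S); case yS: (y \in S) => /=.
  - by rewrite (negbTE (Gind xS yS)) (negbTE (Gind yS xS)) andbF.
  - have := tw x xS; rewrite inE => /andP [/inPatP /(_ x y) [-> ->] _].
    by rewrite /induced !in_setU1 !in_setC eqxx yS orbT.
  - have := tw y yS; rewrite inE => /andP [/inPatP /(_ x y) [-> ->] _].
    by rewrite /induced !in_setU1 !in_setC eqxx xS orbT.
  - have /inPatP /(_ x y) [-> ->] := hPat.
    by rewrite /induced !in_setC xS yS.
rewrite !inE PatG Hrh eqxx andbT /=.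
apply/negP => /existsP [s Hs].
case: (pickP (fun i => s i \in S)) => [i0 si0 | none].
- set w := s i0.
  have sA j : s j \in w |: W.
    rewrite in_setU1 in_setC; case: (eqVneq j i0) => [-> | ji]; first by rewrite eqxx.
    apply/orP; right; apply/negP => sjS.
    have := copy_edge Hs (i:=i0) (j:=j); rewrite eq_sym ji => /(_ isT).
    by rewrite /pf ffunE ffunE si0 sjS.
  have := tw w si0; rewrite inE => /and3P [_ /existsP []]; exists s.
  have := congr1 (fun t : {ffun V -> pat V r} => t w) (phi_psi tF); rewrite ffunE si0 => E.
  by rewrite -E pf_restr (pcopy_restr phi _ sA).
- have sA j : s j \in W by rewrite in_setC none.
  move/existsP: hfree; apply; exists s.
  by rewrite -Hrh pf_restr (pcopy_restr phi _ sA).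
Qed.

Lemma fiber_card : #|Fib| = \prod_(w in S) #|Bset phi G W (w |: W) h|.
Proof.
rewrite -(card_in_imset (f := phiF)); last first.
  by move=> f1 f2 H1 H2 E; rewrite -(psi_phi H1) -(psi_phi H2) E.
have -> : #|[set phiF x | x in Fib]| = #|family Fm|.
  apply: eq_card => t; apply/imsetP/idP.
    by case=> f fF ->; apply: phiF_fam.
  by move=> tF; exists (psiF t); [apply: psiF_Fib | rewrite phi_psi].
rewrite (card_family Fm) foldrE big_map big_enum /=.
rewrite [RHS]big_mkcond /=; apply: eq_bigr => w _.
by rewrite /Fm; case: (w \in S); rewrite ?card1 //.
Qed.

End Fiber.

Theorem decomp : #|Pset phi G| =
  \sum_(h in Pset phi (induced G W)) \prod_(w in S) #|Bset phi G W (w |: W) h|.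
Proof.
rewrite -sum1_card (partition_big (restr W) (mem (Pset phi (induced G W)))) /=; last first.
  by move=> f; apply: restr_P.
apply: eq_bigr => h hP; rewrite -fiber_card // -sum1_card.
by apply: eq_bigl => f; rewrite !inE.
Qed.

End Decomp.

Set Implicit Arguments. Unset Strict Implicit. Unset Printing Implicit Defensive.

Section Comb.
Variables (V T : finType) (P : {pred T}) (X : V -> T -> nat) (S : {set V}).

Definition Fs (s : V -> V) := \sum_(h in P) \prod_(w in S) X (s w) h.

Hypothesis maxF : forall s, (forall w, w \in S -> s w \in S) -> Fs s <= Fs id.

Lemma Fs_ext s t : (forall w, w \in S -> s w = t w) -> Fs s = Fs t.
Proof.
by move=> E; apply: eq_bigr => h _; apply: eq_bigr => w wS; rewrite E.
Qed.

Lemma sum_eq_le (f g : T -> nat) : (forall i, f i <= g i) ->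
  \sum_(i in P) f i = \sum_(i in P) g i -> forall i, i \in P -> f i = g i.
Proof.
move=> le E i iP.
have E2 : \sum_(i in P) g i = \sum_(i in P) f i + \sum_(i in P) (g i - f i).
  by rewrite -big_split; apply: eq_bigr => j _ /=; have := le j; lia.
have : \sum_(i in P) (g i - f i) == 0 by move: E2; rewrite E; lia.
rewrite sum_nat_eq0 => /forallP /(_ i); rewrite iP /= subn_eq0 => H.
by apply/eqP; rewrite eqn_leq le H.
Qed.

Definition upd (s : V -> V) (q y : V) := fun w => if w == q then y else s w.

Lemma prod_split (s : V -> V) p q h : p \in S -> q \in S -> p != q ->
  \prod_(w in S) X (s w) h =
  X (s p) h * (X (s q) h * \prod_(w in S | (w != p) && (w != q)) X (s w) h).
Proof.
move=> pS qS pq; rewrite (bigD1 p) //= (bigD1 q) /=; last by rewrite qS eq_sym.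
by congr (_ * (_ * _)); apply: eq_bigl => w; rewrite andbA.
Qed.

Lemma pairwise s p q : (forall w, w \in S -> s w \in S) -> Fs s = Fs id ->
  p \in S -> q \in S -> p != q ->
  (forall h, h \in P -> \prod_(w in S | (w != p) && (w != q)) X (s w) h = 0
                        \/ X (s p) h = X (s q) h) /\
  Fs (upd s q (s p)) = Fs id.
Proof.
move=> sS Fe pS qS pq.
set Q := fun h => \prod_(w in S | (w != p) && (w != q)) X (s w) h.
have EQ t : (forall w, w != p -> w != q -> t w = s w) ->
   forall h, \prod_(w in S | (w != p) && (w != q)) X (t w) h = Q h.
  by move=> Et h; apply: eq_bigr => w /andP [_ /andP [wp wq]]; rewrite Et.
set s1 := upd s q (s p); set s2 := upd s p (s q).
have s1S : forall w, w \in S -> s1 w \in S.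
  by move=> w wS; rewrite /s1 /upd; case: ifP => _; apply: sS.
have s2S : forall w, w \in S -> s2 w \in S.
  by move=> w wS; rewrite /s2 /upd; case: ifP => _; apply: sS.
have F0 : Fs s = \sum_(h in P) X (s p) h * (X (s q) h * Q h).
  by apply: eq_bigr => h _; rewrite (prod_split s h pS qS pq).
have F1 : Fs s1 = \sum_(h in P) X (s p) h * (X (s p) h * Q h).
  apply: eq_bigr => h _; rewrite (prod_split s1 h pS qS pq) EQ.
    by rewrite /s1 /upd eqxx (negbTE pq).
  by move=> w _ wq; rewrite /s1 /upd (negbTE wq).
have F2 : Fs s2 = \sum_(h in P) X (s q) h * (X (s q) h * Q h).
  apply: eq_bigr => h _; rewrite (prod_split s2 h pS qS pq) EQ.
    by rewrite /s2 /upd eqxx eq_sym (negbTE pq).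
  by move=> w wp _; rewrite /s2 /upd (negbTE wp).
have M1 := maxF s1S; have M2 := maxF s2S.
set A := fun h => X (s p) h * (X (s p) h * Q h).
set B := fun h => X (s q) h * (X (s q) h * Q h).
set C := fun h => X (s p) h * (X (s q) h * Q h).
have le : forall h, C h + C h <= A h + B h.
  move=> h; rewrite /A /B /C; set a := X (s p) h; set b := X (s q) h; set c := Q h.
  have key : forall x y : nat, x * (y * c) + x * (y * c) <= x * (x * c) + y * (y * c).
    move=> x y; wlog xy : x y / x <= y.
      move=> Hw; case: (leqP x y) => [/Hw //|/ltnW yx].
      by rewrite [x * (y * c)]mulnCA addnC; apply: Hw.
    have [e ->] : exists e, y = x + e by exists (y - x); lia.
    have -> : x * (x * c) + (x + e) * ((x + e) * c) =
              (x * ((x + e) * c) + x * ((x + e) * c)) + e * (e * c) by nia.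
    exact: leq_addr.
  exact: key.
have E0 : \sum_(h in P) (C h + C h) = Fs s + Fs s by rewrite big_split F0.
have E12 : \sum_(h in P) (A h + B h) = Fs s1 + Fs s2 by rewrite big_split F1 F2.
have L0 : \sum_(h in P) (C h + C h) <= \sum_(h in P) (A h + B h) by apply: leq_sum.
have Es : \sum_(h in P) (C h + C h) = \sum_(h in P) (A h + B h).
  move: L0 M1 M2; rewrite E0 E12 Fe; lia.
have Eq := sum_eq_le le Es.
split.
  move=> h hP; have := Eq h hP; rewrite /A /B /C -/(Q h).
  case: (posnP (Q h)) => [-> | Qp]; first by left.
  move=> H; right; set a := X (s p) h in H *; set b := X (s q) h in H *.
  have H' : (a * a + b * b) * Q h = (a * b + a * b) * Q h by rewrite !mulnDl -!mulnA H.
  move/eqP: H'; rewrite eqn_pmul2r // => /eqP; nia.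
move: L0 M1 M2 Es; rewrite E0 E12 Fe; lia.
Qed.

Lemma chain u v (L : seq V) : u \in S -> v \in S -> u != v ->
  all (fun w => [&& w \in S, w != u & w != v]) L ->
  Fs (fun w => if w \in L then u else w) = Fs id.
Proof.
move=> uS vS uv; elim: L => [|t L IH] /=.
  by move=> _; apply: Fs_ext => w _.
case/andP=> /and3P [tS tu tv] aL; have {}IH := IH aL.
case tL: (t \in L).
  rewrite -IH; apply: Fs_ext => w _; rewrite in_cons.
  by case: (eqVneq w t) => [->|_] /=; rewrite ?tL.
have sS : forall w, w \in S -> (if w \in L then u else w) \in S.
  by move=> w wS; case: ifP.
have uL : u \in L = false.
  apply/negbTE/negP => /(allP aL) /and3P [_]; by rewrite eqxx.
have ut : u != t by rewrite eq_sym.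
have [_ E] := pairwise sS IH uS tS ut.
rewrite -E; apply: Fs_ext => w _; rewrite /upd in_cons uL.
by case: (eqVneq w t).
Qed.

Lemma Fs_conc u v : u \in S -> v \in S -> u != v ->
  forall h, h \in P -> X u h = 0 \/ X u h = X v h.
Proof.
move=> uS vS uv h hP.
pose L := [seq w <- enum S | (w != u) && (w != v)].
have aL : all (fun w => [&& w \in S, w != u & w != v]) L.
  by apply/allP => w; rewrite mem_filter mem_enum => /andP [-> ->].
have E := chain uS vS uv aL.
have sS : forall w, w \in S -> (if w \in L then u else w) \in S.
  by move=> w wS; case: ifP.
have [H _] := pairwise sS E uS vS uv.
have uL : u \in L = false by rewrite mem_filter eqxx.
have vL : v \in L = false by rewrite mem_filter eqxx andbF.
case: (H h hP); rewrite ?uL ?vL; last by right.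
case: (posnP (X u h)) => [->|Xp]; first by left.
move=> Q0; exfalso; move: Q0; apply/eqP; rewrite -lt0n.
rewrite (eq_bigr (fun _ => X u h)); first by apply: prodn_gt0.
by move=> w /and3P [wS wu wv]; rewrite mem_filter wu wv mem_enum wS.
Qed.

Lemma Fs_eq u v : u \in S -> v \in S -> forall h, h \in P -> X u h = X v h.
Proof.
move=> uS vS h hP; case: (eqVneq u v) => [->//|uv].
have [A|A] := Fs_conc uS vS uv hP; last by [].
have vu : v != u by rewrite eq_sym.
have [B|B] := Fs_conc vS uS vu hP; last by [].
by rewrite A B.
Qed.

End Comb.

Set Implicit Arguments. Unset Strict Implicit. Unset Printing Implicit Defensive.

Section Iso.
Variables (V : finType) (r k : nat) (phi : coloring r (Kgraph k)).

Definition pc (p : {perm V}) (f : pat V r) : pat V r :=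
  [ffun x => [ffun y => f (p x) (p y)]].

Lemma pc_B (p : {perm V}) (G1 G2 : rel V) A1 A2 (W : {set V}) (h : pat V r) (f : pat V r) :
  (forall x y, induced G2 A2 (p x) (p y) = induced G1 A1 x y) ->
  (forall x, x \in W -> p x = x) ->
  f \in Bset phi G2 W A2 h -> pc p f \in Bset phi G1 W A1 h.
Proof.
move=> Hiso Hfix; rewrite !inE => /and3P [fP ff /forallP fA].
apply/and3P; split.
- apply/inPatP => x y; rewrite !ffunE.
  have [E1 E2] := (inPatP _ _ fP) (p x) (p y).
  by rewrite E1 -E1 E2 (inj_eq perm_inj) !Hiso.
- have -> : pf (pc p f) = fun x y => pf f (p x) (p y).
    by apply: functional_extensionality => x; apply: functional_extensionality => y; rewrite /pf !ffunE.
  by rewrite pfree_perm.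
- apply/forallP => x; apply/forallP => y; apply/implyP => /andP [xW yW].
  rewrite !ffunE !Hfix //.
  by have /forallP /(_ y) /implyP := fA x; apply; rewrite xW yW.
Qed.

Lemma Bset_iso (p : {perm V}) (G1 G2 : rel V) A1 A2 (W : {set V}) (h : pat V r) :
  (forall x y, induced G2 A2 (p x) (p y) = induced G1 A1 x y) ->
  (forall x, x \in W -> p x = x) ->
  #|Bset phi G1 W A1 h| = #|Bset phi G2 W A2 h|.
Proof.
move=> Hiso Hfix.
have K : cancel (pc p) (pc (p^-1)%g).
  by move=> f; apply/ffunP => x; apply/ffunP => y; rewrite !ffunE !permKV.
have K' : cancel (pc (p^-1)%g) (pc p).
  by move=> f; apply/ffunP => x; apply/ffunP => y; rewrite !ffunE !permK.
have Hiso' : forall x y, induced G1 A1 ((p^-1)%g x) ((p^-1)%g y) = induced G2 A2 x y.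
  by move=> x y; rewrite -Hiso !permKV.
have Hfix' : forall x, x \in W -> (p^-1)%g x = x.
  by move=> x xW; rewrite -{1}(Hfix x xW) permK.
rewrite -[RHS](card_imset _ (can_inj K)); apply: eq_card => f; apply/idP/imsetP.
  move=> fB; exists (pc (p^-1)%g f); last by rewrite K'.
  exact: pc_B Hiso' Hfix' fB.
by case=> f2 f2B ->; apply: pc_B Hiso Hfix f2B.
Qed.

End Iso.

Section Main.
Variables (V : finType) (r k : nat) (phi : coloring r (Kgraph k)) (g : rel V) (S : {set V}).
Hypotheses (k1 : 1 < k) (d : 'I_r) (gs : symmetric g) (gi : irreflexive g)
  (Sind : forall x y, x \in S -> y \in S -> ~~ g x y).

Definition Gs (s : V -> V) : rel V := fun x y =>
  if x \in S then (y \notin S) && g (s x) y else if y \in S then g (s y) x else g x y.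

Lemma Gs_sym s : symmetric (Gs s).
Proof.
move=> x y; rewrite /Gs; case xS: (x \in S); case yS: (y \in S) => //=.
Qed.

Lemma Gs_simple s : simple_graph (Gs s).
Proof.
split; first exact: Gs_sym.
by move=> x; rewrite /Gs; case xS: (x \in S) => //=; rewrite ?xS ?gi.
Qed.

Lemma Gs_ind s x y : x \in S -> y \in S -> ~~ Gs s x y.
Proof. by move=> xS yS; rewrite /Gs xS yS. Qed.

Lemma Gs_id : Gs id = g.
Proof.
apply: functional_extensionality => x; apply: functional_extensionality => y.
rewrite /Gs; case xS: (x \in S); case yS: (y \in S) => //=.
by rewrite (negbTE (Sind xS yS)).
Qed.

Lemma induced_Gs s : induced (Gs s) (~: S) = induced g (~: S).
Proof.
apply: functional_extensionality => x; apply: functional_extensionality => y.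
rewrite /induced /Gs !in_setC.
by case xS: (x \in S); case yS: (y \in S).
Qed.

Lemma Gs_fix s w : w \in S -> s w \in S -> forall x, x \in ~: S -> tperm w (s w) x = x.
Proof.
move=> wS swS x; rewrite in_setC => xS; apply: tpermD.
  by apply: contra xS => /eqP <-.
by apply: contra xS => /eqP <-.
Qed.

Lemma Gs_iso s w : w \in S -> s w \in S -> forall x y,
  induced g (s w |: ~: S) (tperm w (s w) x) (tperm w (s w) y) =
  induced (Gs s) (w |: ~: S) x y.
Proof.
move=> wS swS x y; case: (eqVneq (s w) w) => [E|ne].
  rewrite E tperm1 !perm1 /induced /Gs !in_setU1 !in_setC.
  by case: (eqVneq x w) => [->|xw]; case: (eqVneq y w) => [->|yw]; rewrite /= ?wS ?E ?gi //=;
    case: (x \in S); case: (y \in S); rewrite //= ?andbb //= gs.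
have ne' := ne; rewrite eq_sym in ne'.
case: (eqVneq x w) => [->|xw]; [rewrite tpermL | case: (eqVneq x (s w)) => [->|xsw];
  [rewrite tpermR | rewrite tpermD 1?eq_sym //]];
 (case: (eqVneq y w) => [->|yw]; [rewrite tpermL | case: (eqVneq y (s w)) => [->|ysw];
  [rewrite tpermR | rewrite tpermD 1?eq_sym //]]);
 rewrite /induced /Gs !in_setU1 !in_setC ?eqxx ?wS ?swS ?(negbTE ne) ?(negbTE ne') /= ?gi ?andbF //=;
 rewrite ?(negbTE xw) ?(negbTE yw) ?(negbTE xsw) ?(negbTE ysw) /=;
 by case: (x \in S); case: (y \in S); rewrite //= ?andbb //= gs.
Qed.

Lemma cnt_Gs s : (forall w, w \in S -> s w \in S) ->
  cnt phi (Gs s) = Fs (Pset phi (induced g (~: S)))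
     (fun w h => #|Bset phi g (~: S) (w |: ~: S) h|) S s.
Proof.
move=> sS; rewrite (cnt_P phi d (Gs_sym s)) (decomp phi k1 (@Gs_ind s)) induced_Gs.
apply: eq_bigr => h _; apply: eq_bigr => w wS.
apply: Bset_iso (Gs_iso wS (sS w wS)) (Gs_fix wS (sS w wS)).
Qed.

End Main.

Unset Implicit Arguments. Set Strict Implicit. Set Printing Implicit Defensive.

Theorem corollary2p8 (r k : nat) (phi : coloring r (Kgraph k))
  (V : finType) (g : rel V) (S : {set V}) (u v : V) :
  2 <= r -> 3 <= k ->
  extremal phi g ->
  (forall x y, x \in S -> y \in S -> ~~ g x y) ->
  u \in S -> v \in S ->
  cvec phi g (~: S) u = cvec phi g (~: S) v.
Proof.
move=> r2 k3 [[gs gi] ext] Sind uS vS.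
have k1 : 1 < k := ltnW k3.
have d : 'I_r := Ordinal (ltnW r2).
apply: functional_extensionality => Hh; rewrite /cvec; case: ifP => // Hfree.
congr Some; rewrite !(cext_B phi d) //.
have hP : ecolF Hh \in Pset phi (induced g (~: S)).
  by rewrite inE ecolF_Pat pf_ecolF -Ffree_pfree //; apply: induced_sym.
have maxF : forall s, (forall w, w \in S -> s w \in S) ->
   Fs (Pset phi (induced g (~: S))) (fun w h => #|Bset phi g (~: S) (w |: ~: S) h|) S s <=
   Fs (Pset phi (induced g (~: S))) (fun w h => #|Bset phi g (~: S) (w |: ~: S) h|) S id.
  move=> s sS.
  rewrite -(cnt_Gs phi k1 d gs gi sS) -(cnt_Gs phi k1 d gs gi (s:=id)) //.
  rewrite (Gs_id gs Sind); apply: ext; exact: (Gs_simple S gs gi).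
exact: (Fs_eq maxF uS vS hP).
Qed.
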